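(* Let $H$ be a graph and $H'$ any graph in the splitting family $\mathcal{H}(H)$. Then $\nu(H')\ge \nu(H)$.
   Context: $\nu(G)$ is the matching number of $G$. A vertex split on a vertex $v$ of $H$ replaces $v$ by an independent set of $d(v)$ new vertices, each adjacent to exactly one vertex of $N_H(v)$, distinct new vertices being adjacent to distinct neighbours. A vertex split on a set $U\subseteq V(H)$ means applying vertex splits to the vertices of $U$ one by one. The splitting family $\mathcal{H}(H)$ is the family of all graphs obtained from $H$ by applying a vertex split on some $U\subseteq V(H)$. *)

(* Defs.v *)
From mathcomp Require Import all_boot.
Set Implicit Arguments. Unset Strict Implicit. Unset Printing Implicit Defensive.

Record sgraph := SGraph {
  vert : finType;
  adj : rel vert;
  adj_sym : symmetric adj;
  adj_irr : irreflexive adj }.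

(* Vertex split on v: v is replaced by one new vertex per neighbour w of v
   (the vertex labelled w, inr w), adjacent exactly to w. *)
Section VSplit.
Variables (G : sgraph) (v : vert G).

Definition svert : finType := ({x : vert G | x != v} + {w : vert G | @adj G v w})%type.

Definition sadj (a b : svert) : bool :=
  match a, b with
  | inl x, inl y => @adj G (val x) (val y)
  | inl x, inr w => val x == val w
  | inr w, inl x => val w == val x
  | inr _, inr _ => false
  end.

Lemma sadj_sym : symmetric sadj.
Proof.
move=> [x|w] [y|z] //=; first exact: adj_sym.
all: by rewrite eq_sym.
Qed.

Lemma sadj_irr : irreflexive sadj.
Proof.
move=> [x|w] //=; first exact: adj_irr.
Qed.

Definition vsplit : sgraph := SGraph sadj_sym sadj_irr.

Definition vsplit_lift (x : vert G) : option (vert vsplit) :=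
  match insub x with Some y => Some (inl y : svert) | None => None end.
End VSplit.

(* Apply vertex splits one by one to the vertices in the list s (vertices of
   the original graph, tracked through the embedding f). *)
Fixpoint splitl (T : Type) (s : seq T) (G : sgraph) (f : T -> option (vert G))
  : sgraph :=
  match s with
  | [::] => G
  | t :: s' =>
      match f t with
      | None => splitl s' f
      | Some v => splitl s' (fun t' => obind (@vsplit_lift G v) (f t'))
      end
  end.

(* vertex split on a set U of vertices of H, in the order given by s *)
Definition vsplit_set (H : sgraph) (s : seq (vert H)) : sgraph :=
  splitl s (fun x : vert H => Some x).

Definition is_edge (G : sgraph) (e : {set vert G}) : bool :=
  [exists x, exists y, @adj G x y && (e == [set x; y])].

Definition matchingb (G : sgraph) (M : {set {set vert G}}) : bool :=
  [forall e in M, is_edge e] &&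
  [forall e in M, forall f in M, (e != f) ==> [disjoint e & f]].

Definition matching_number (G : sgraph) : nat :=
  \max_(M : {set {set vert G}} | matchingb M) #|M|.

(* Main.v *)
Require Import Defs.
From mathcomp Require Import all_boot.
Set Implicit Arguments. Unset Strict Implicit. Unset Printing Implicit Defensive.

Section S.
Variables (G : sgraph) (v : vert G).

Definition psi (e : {set vert G}) : {set vert (vsplit v)} :=
  [set y : svert v | match y with inl x => val x \in e | inr w => (v \in e) && (val w \in e) end].

Lemma inlE (a b : {x | x != v}) : (inl a == inl b :> svert v) = (a == b).
Proof. by []. Qed.
Lemma inlrE (a : {x | x != v}) (c : {w | @adj G v w}) : ((inl a == inr c :> svert v) = false) * ((inr c == inl a :> svert v) = false).
Proof. by []. Qed.
Lemma inrE (a b : {w | @adj G v w}) : (inr a == inr b :> svert v) = (a == b).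
Proof. by []. Qed.

Lemma subE (P : pred (vert G)) (z : {x | P x}) x (xv : P x) : (z == Sub x xv) = (val z == x).
Proof. by apply/eqP/eqP => [->|E] //; apply: val_inj. Qed.

Lemma psi_edge2 x y : @adj G x y -> x != v -> y != v -> is_edge (psi [set x; y]).
Proof.
move=> axy xv yv; apply/existsP; exists (inl (Sub x xv)); apply/existsP; exists (inl (Sub y yv)).
rewrite /= axy /=; apply/eqP/setP => -[z|z]; rewrite !inE /=.
  rewrite !inlE; apply/orP/orP => -[] /eqP E; [left|right|left|right]; apply/eqP => //; try (apply: val_inj; exact E); by rewrite E.
by rewrite inlrE ![v == _]eq_sym (negbTE xv) (negbTE yv).
Qed.

Lemma psi_edge1 y (ay : @adj G v y) : is_edge (psi [set v; y]).
Proof.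
have yv : y != v by apply: contraTneq ay => ->; rewrite adj_irr.
apply/existsP; exists (inr (Sub y ay)); apply/existsP; exists (inl (Sub y yv)).
rewrite /= eqxx /=; apply/eqP/setP => -[z|z]; rewrite !inE /=.
  rewrite ?inlrE !inlE (negbTE (valP z)) /=; apply/eqP/eqP => E; [apply: val_inj; exact E | by rewrite E].
have zv : (sval z == v) = false by case: z => z az /=; apply: contraTF az => /eqP ->; rewrite adj_irr.
rewrite ?inlrE !inrE eqxx orbF zv /=; apply/eqP/eqP => E; [apply: val_inj; exact E | by rewrite E].
Qed.

Lemma psi_edge e : is_edge e -> is_edge (psi e).
Proof.
case/existsP=> x /existsP [y /andP [axy /eqP ->]].
have [xv0 | xv] := eqVneq x v; first by rewrite xv0; rewrite xv0 in axy; apply: psi_edge1.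
have [yv' | yv] := eqVneq y v.
  by rewrite setUC yv'; rewrite yv' in axy; apply: psi_edge1; rewrite adj_sym.
exact: psi_edge2.
Qed.

Lemma psi_disj (e f : {set vert G}) : [disjoint e & f] -> [disjoint psi e & psi f].
Proof.
move=> d; rewrite -setI_eq0; apply/eqP/setP => -[z|z]; rewrite !inE /=.
  by apply/negP => /andP [a b]; move/disjoint_setI0: d => /setP /(_ (val z)); rewrite !inE a b.
by apply/negP => /andP [/andP [a _] /andP [b _]]; move/disjoint_setI0: d => /setP /(_ v); rewrite !inE a b.
Qed.

Lemma psi_n0 e : is_edge e -> psi e != set0.
Proof.
move/psi_edge/existsP => [x /existsP [y /andP [_ /eqP ->]]].
by apply/set0Pn; exists x; rewrite !inE eqxx.
Qed.

Lemma step : matching_number G <= matching_number (vsplit v).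
Proof.
rewrite /matching_number.
have [M MM ME] : exists2 M : {set {set vert G}}, matchingb M & \max_(N : {set {set vert G}} | matchingb N) #|N| = #|M|.
  have h : 0 < #|[pred M : {set {set vert G}} | matchingb M]|.
    apply/card_gt0P; exists set0; rewrite inE /matchingb.
    by apply/andP; split; apply/forallP => e; rewrite inE.
  have [M0 HM0 E] := eq_bigmax_cond (fun M : {set {set vert G}} => #|M|) h.
  by exists M0.
rewrite ME; case/andP: MM => /forall_inP Me /forall_inP Md.
have inj : {in M &, injective psi}.
  move=> e f eM fM pef; apply/eqP; apply/negP => /negP nef.
  have := psi_disj (implyP (forall_inP (Md e eM) f fM) nef).
  rewrite pef -setI_eq0 setIid; apply/negP; exact: psi_n0 (Me f fM).
rewrite -(card_in_imset inj); apply: leq_bigmax_cond.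
apply/andP; split; apply/forall_inP.
  by move=> _ /imsetP [e eM ->]; apply: psi_edge; apply: Me.
move=> _ /imsetP [e eM ->]; apply/forall_inP => _ /imsetP [f fM ->].
apply/implyP => nef; apply: psi_disj.
apply: (implyP (forall_inP (Md e eM) f fM)); by apply: contraNneq nef => ->.
Qed.
End S.

Lemma splitl_ge (T : Type) (s : seq T) (G : sgraph) (f : T -> option (vert G)) : matching_number G <= matching_number (Defs.splitl s f).
Proof.
elim: s G f => //= t s IH G f; case: (f t) => [v|]; last exact: IH.
exact: leq_trans (step v) (IH _ _).
Qed.

Theorem lemma2p3 (H : sgraph) (s : seq (vert H)) :
  uniq s -> matching_number H <= matching_number (vsplit_set s).
Proof. by move=> _; apply: splitl_ge. Qed.
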